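(* Let $p,q$ be squarefree positive integers such that $K=\mathbb{Q}(\sqrt p,\sqrt q)$ has degree $4$ over $\mathbb{Q}$, and let $r=\frac{pq}{\gcd(p,q)^2}$. Suppose that $\alpha=a+b\sqrt p+c\sqrt q+d\sqrt r$ (with $a,b,c,d\in\mathbb{Q}$) is a totally positive element of the ring of integers $\mathcal{O}_K$, and let $\mathrm{Tr}$ denote the trace from $K$ to $\mathbb{Q}$. Then: (1) if $b\neq 0$, then $\mathrm{Tr}(\alpha)>\sqrt p$; (2) if $c\neq 0$, then $\mathrm{Tr}(\alpha)>\sqrt q$; (3) if $d\neq 0$, then $\mathrm{Tr}(\alpha)>\sqrt r$. Finally, if $\alpha\notin\mathbb{Z}$, then $\mathrm{Tr}(\alpha)>\min(\sqrt p,\sqrt q,\sqrt r)$.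
   Context: An element of $K$ is totally positive if all of its images under the four real embeddings of $K$ are positive. *)

(* Defs.v *)
From mathcomp Require Import all_boot all_order all_algebra.
From mathcomp Require Import all_field.
Set Implicit Arguments. Unset Strict Implicit. Unset Printing Implicit Defensive.
Import Order.TTheory GRing.Theory Num.Theory.
Local Open Scope ring_scope.

Definition squarefree (n : nat) : Prop :=
  forall k : nat, (1 < k)%N -> ~~ (k * k %| n)%N.

Definition rpart (p q : nat) : nat := (p * q %/ (gcdn p q ^ 2))%N.

(* K = Q(sqrt p, sqrt q) is realised inside algC via sqrtC.
   The elements 1, sqrt p, sqrt q, sqrt r span K over Q; [K:Q] = 4 means
   that they are Q-linearly independent. *)
Definition degree4 (p q : nat) : Prop :=
  forall a b c d : rat,
    ratr a + ratr b * sqrtC p%:R + ratr c * sqrtC q%:R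
      + ratr d * sqrtC (rpart p q)%:R = 0 :> algC ->
    [/\ a = 0, b = 0, c = 0 & d = 0].

(* The image of alpha = a + b sqrt p + c sqrt q + d sqrt r under the real
   embedding sending sqrt p to s*sqrt p and sqrt q to t*sqrt q (s,t = +-1);
   since sqrt r = sqrt p * sqrt q / gcd(p,q), sqrt r goes to s*t*sqrt r. *)
Definition emb (p q : nat) (a b c d : rat) (s t : bool) : algC :=
  let sg (x : bool) : algC := if x then 1 else -1 in
  ratr a + sg s * ratr b * sqrtC p%:R + sg t * ratr c * sqrtC q%:R
    + sg s * sg t * ratr d * sqrtC (rpart p q)%:R.

Definition alphaC (p q : nat) (a b c d : rat) : algC := emb p q a b c d true true.

Definition totally_positive (p q : nat) (a b c d : rat) : Prop :=
  forall s t : bool, 0 < emb p q a b c d s t.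

Definition trK (p q : nat) (a b c d : rat) : algC :=
  emb p q a b c d true true + emb p q a b c d true false
  + emb p q a b c d false true + emb p q a b c d false false.

(* Main.v *)
Require Import Defs.
From mathcomp Require Import all_boot all_order all_algebra all_field.
From mathcomp Require Import ring zify.
Import Order.TTheory GRing.Theory Num.Theory.
Local Open Scope ring_scope.

Record Q4 := mk4 { c0 : rat; c1 : rat; c2 : rat; c3 : rat }.

Definition E (p q : nat) (s t : bool) (u : Q4) : algC :=
  emb p q (c0 u) (c1 u) (c2 u) (c3 u) s t.

Definition mul4 (p q : nat) (u v : Q4) : Q4 :=
  let g : rat := (gcdn p q)%:R in
  let pg : rat := (p %/ gcdn p q)%:R in
  let qg : rat := (q %/ gcdn p q)%:R in
  let r : rat := (rpart p q)%:R in
  mk4 (c0 u * c0 v + p%:R * c1 u * c1 v + q%:R * c2 u * c2 v + r * c3 u * c3 v)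
      (c0 u * c1 v + c1 u * c0 v + qg * (c2 u * c3 v + c3 u * c2 v))
      (c0 u * c2 v + c2 u * c0 v + pg * (c1 u * c3 v + c3 u * c1 v))
      (c0 u * c3 v + c3 u * c0 v + g * (c1 u * c2 v + c2 u * c1 v)).

Definition add4 (u v : Q4) : Q4 :=
  mk4 (c0 u + c0 v) (c1 u + c1 v) (c2 u + c2 v) (c3 u + c3 v).

Definition cst4 (x : rat) : Q4 := mk4 x 0 0 0.

Lemma E_add p q s t u v : E p q s t (add4 u v) = E p q s t u + E p q s t v.
Proof. by case: s; case: t; rewrite /E /emb /= !rmorphD /=; ring. Qed.

Lemma E_cst p q s t x : E p q s t (cst4 x) = ratr x.
Proof. by case: s; case: t; rewrite /E /emb /= !rmorph0; ring. Qed.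

Lemma gcd_facts (p q : nat) : (0 < p)%N ->
  let g := gcdn p q in
  [/\ (p %/ g)%:R = p%:R / g%:R :> algC, (q %/ g)%:R = q%:R / g%:R :> algC,
      (rpart p q)%:R = p%:R * q%:R / (g%:R * g%:R) :> algC,
      sqrtC (rpart p q)%:R = sqrtC p%:R * sqrtC q%:R / g%:R :> algC
      & g%:R != 0 :> algC].
Proof.
move=> p0 g.
have g0 : (0 < g)%N by rewrite gcdn_gt0 p0.
have gnz : g%:R != 0 :> algC by rewrite pnatr_eq0 -lt0n.
have hr : (rpart p q * (g * g) = p * q)%N.
  rewrite /rpart expnS expn1 divnK //; exact: dvdn_mul (dvdn_gcdl _ _) (dvdn_gcdr _ _).
have hr' : (rpart p q)%:R = p%:R * q%:R / (g%:R * g%:R) :> algC.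
  by rewrite -!natrM -hr natrM mulfK // pnatr_eq0 -lt0n muln_gt0 g0.
split => //.
- by rewrite natr_div ?dvdn_gcdl // unitfE.
- by rewrite natr_div ?dvdn_gcdr // unitfE.
- have hX : (rpart p q)%:R * g%:R ^+ 2 = p%:R * q%:R :> algC.
    by rewrite expr2 -!natrM hr.
  rewrite -sqrtCM ?nnegrE ?ler0n // -hX sqrtCM ?nnegrE ?exprn_ge0 ?ler0n //.
  by rewrite sqrCK ?ler0n // mulfK.
Qed.

Lemma E_mul p q s t u v : (0 < p)%N ->
  E p q s t (mul4 p q u v) = E p q s t u * E p q s t v.
Proof.
move=> p0; have [hpg hqg hr hR gnz] := @gcd_facts p q p0.
case: u v => [x0 x1 x2 x3] [y0 y1 y2 y3].
rewrite /E /emb /mul4 /= !(rmorphD, rmorphM) /= !ratr_nat hR hpg hqg hr.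
set P := sqrtC p%:R; set Q := sqrtC q%:R; set G := (gcdn p q)%:R.
have hP : p%:R = P * P by rewrite /P -expr2 sqrtCK.
have hQ : q%:R = Q * Q by rewrite /Q -expr2 sqrtCK.
rewrite hP hQ.
by case: s; case: t => /=; field.
Qed.

Fixpoint hrec4 p q (l : seq algC) (u : Q4) : Q4 :=
  if l is c :: l' then add4 (mul4 p q (hrec4 p q l' u) u) (cst4 (getCrat c))
  else cst4 0.

Lemma E_hrec p q s t l u : (0 < p)%N -> {subset l <= Crat} ->
  E p q s t (hrec4 p q l u) = horner_rec l (E p q s t u).
Proof.
move=> p0; elim: l => [|c l IH] hl /=; first by rewrite E_cst rmorph0.
rewrite E_add E_mul // E_cst IH; last by move=> x xl; apply: hl; rewrite inE xl orbT.
by rewrite getCratK // hl // inE eqxx.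
Qed.

Lemma emb_Aint p q a b c d s t : (0 < p)%N -> degree4 p q ->
  alphaC p q a b c d \in Aint -> emb p q a b c d s t \in Aint.
Proof.
move=> p0 deg hA.
pose u := mk4 a b c d.
have Eu s' t' : E p q s' t' u = emb p q a b c d s' t' by [].
pose P := minCpoly (alphaC p q a b c d).
have hPZ : P \is a polyOver Num.int := hA.
have hsub : {subset (P : seq algC) <= Crat}.
  move=> x xP; apply: rpred_int_num.
  by move: hPZ => /allP /(_ x xP).
have h0 : E p q true true (hrec4 p q P u) = 0.
  rewrite E_hrec // Eu; have := root_minCpoly (alphaC p q a b c d).
  by rewrite /root /horner => /eqP.
have hz : hrec4 p q P u = mk4 0 0 0 0.
  move: h0; case: (hrec4 p q P u) => y0 y1 y2 y3.
  by rewrite /E /emb /= !mul1r => /deg [-> -> -> ->].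
apply: (root_monic_Aint _ (minCpoly_monic _) hPZ).
rewrite /root /horner -Eu -E_hrec // hz.
rewrite /E /emb /= !rmorph0 !mulr0; apply/eqP; ring.
Qed.
Lemma sqf_int (n : nat) (x : rat) : squarefree n ->
  x ^+ 2 * n%:R \in Num.int -> x \in Num.int.
Proof.
move=> sf /intrP[k hk].
rewrite Qint_def.
have hz : k * denq x ^+ 2 = numq x ^+ 2 * n%:Z.
  have hn' : ((n%:Z)%:~R : rat) = n%:R by [].
  apply: (@intr_inj rat); rewrite !rmorphM /= numqE -hk; ring.
have hn : (`|denq x| ^ 2 %| `|numq x| ^ 2 * n)%N.
  apply/dvdnP; exists `|k|%N.
  by have := congr1 absz hz; rewrite !abszM -!mulnn => ->.
rewrite Gauss_dvdr in hn; last first.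
  by rewrite coprimeXl // coprimeXr // coprime_sym coprime_num_den.
apply/eqP; apply/eqP; case: (ltngtP `|denq x|%N 1) => h.
- have := denq_gt0 x; lia.
- by move: (sf _ h); rewrite mulnn hn.
- have := denq_gt0 x; lia.
Qed.

Lemma rpart_sqf p q : (0 < p)%N -> (0 < q)%N -> squarefree p -> squarefree q ->
  squarefree (rpart p q) /\ (0 < rpart p q)%N.
Proof.
move=> p0 q0 sp sq.
set g := gcdn p q.
have g0 : (0 < g)%N by rewrite gcdn_gt0 p0.
set p' := (p %/ g)%N; set q' := (q %/ g)%N.
have hp : p = (p' * g)%N by rewrite divnK // dvdn_gcdl.
have hq : q = (q' * g)%N by rewrite divnK // dvdn_gcdr.
have cop : coprime p' q'.
  rewrite /coprime; apply/eqP.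
  have : g = (gcdn p' q' * g)%N by rewrite muln_gcdl -hp -hq.
  move=> h; apply/eqP; rewrite -(eqn_pmul2r g0) mul1n; apply/eqP; exact: esym h.
have hr : rpart p q = (p' * q')%N.
  rewrite /rpart -/g {1}hp {1}hq.
  have -> : (p' * g * (q' * g) = p' * q' * g ^ 2)%N by rewrite expnS expn1; ring.
  by rewrite mulnK // expn_gt0 g0.
rewrite hr; split; last first.
  rewrite muln_gt0; apply/andP; split.
  - by rewrite divn_gt0 // dvdn_leq // dvdn_gcdl.
  - by rewrite divn_gt0 // dvdn_leq // dvdn_gcdr.
move=> k k1; apply/negP => hk.
have pl := pdiv_prime k1.
set l := pdiv k in pl.
have hl : (l * l %| p' * q')%N.
  apply: dvdn_trans hk; apply: dvdn_mul; exact: pdiv_dvd.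
have l1 := prime_gt1 pl.
have : (l %| p' * q')%N by apply: dvdn_trans hl; apply: dvdn_mulr.
rewrite Euclid_dvdM // => /orP [hl1 | hl1].
- have c1 : coprime (l * l) q'.
    by rewrite coprimeMl andbb; apply: coprime_dvdl hl1 cop.
  rewrite Gauss_dvdl // in hl.
  by move: (sp _ l1); rewrite hp (dvdn_trans hl) // dvdn_mulr.
- have c1 : coprime (l * l) p'.
    by rewrite coprimeMl andbb; apply: (coprime_dvdl hl1); rewrite coprime_sym.
  rewrite mulnC Gauss_dvdl // in hl.
  by move: (sq _ l1); rewrite hq (dvdn_trans hl) // dvdn_mulr.
Qed.

Lemma key_pos (n : nat) (a e : rat) : squarefree n -> (0 < e) ->
  2%:R * ratr a + 2%:R * ratr e * sqrtC n%:R \in Aint ->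
  2%:R * ratr a - 2%:R * ratr e * sqrtC n%:R \in Aint ->
  0 < 2%:R * ratr a - 2%:R * ratr e * sqrtC (n%:R : algC) ->
  sqrtC n%:R < 4%:R * ratr a :> algC.
Proof.
move=> sf e0 h1 h2 pos2.
set X := sqrtC n%:R.
have hX2 : X ^+ 2 = n%:R by rewrite sqrtCK.
have hX0 : 0 <= X by rewrite sqrtC_ge0 ler0n.
set f : rat := 4%:R * e.
have hf : ratr f = 4%:R * ratr e :> algC by rewrite rmorphM /= ratr_nat.
have hA : ratr f * X \in Aint.
  have -> : ratr f * X = (2%:R * ratr a + 2%:R * ratr e * X) -
                         (2%:R * ratr a - 2%:R * ratr e * X) by rewrite hf; ring.
  exact: rpredB.
have hA2 : ratr (f ^+ 2 * n%:R) \in Aint.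
  have -> : ratr (f ^+ 2 * n%:R) = (ratr f * X) * (ratr f * X) :> algC.
    by rewrite rmorphM rmorphXn /= ratr_nat -hX2; ring.
  exact: rpredM.
have hI : f ^+ 2 * n%:R \in Num.int.
  by rewrite -(@Cint_rat) Cint_rat_Aint // Crat_rat.
have /intrP [m hm] := @sqf_int n f sf hI.
have f1 : 1 <= f.
  have : 0 < f by rewrite /f mulr_gt0.
  by rewrite hm ltr0z ler1z gtz0_ge1.
have f1' : 1 <= ratr f :> algC by rewrite -(rmorph1 (ratr : rat -> algC)) ler_rat.
apply: (le_lt_trans (ler_peMl hX0 f1')).
rewrite -subr_gt0.
have -> : 4%:R * ratr a - ratr f * X =
          2%:R * (2%:R * ratr a - 2%:R * ratr e * X) :> algC by rewrite hf; ring.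
by rewrite mulr_gt0 // ltr0n.
Qed.

Lemma key (n : nat) (a e : rat) : squarefree n -> e != 0 ->
  2%:R * ratr a + 2%:R * ratr e * sqrtC n%:R \in Aint ->
  2%:R * ratr a - 2%:R * ratr e * sqrtC n%:R \in Aint ->
  0 < 2%:R * ratr a + 2%:R * ratr e * sqrtC (n%:R : algC) ->
  0 < 2%:R * ratr a - 2%:R * ratr e * sqrtC (n%:R : algC) ->
  sqrtC n%:R < 4%:R * ratr a :> algC.
Proof.
move=> sf ne h1 h2 p1 p2.
have [e0|e0|e0] := ltgtP e 0; last by rewrite e0 eqxx in ne.
- apply: (@key_pos n a (- e)) => //; first by rewrite oppr_gt0.
  + by rewrite rmorphN /= mulrN mulNr.
  + by rewrite rmorphN /= mulrN mulNr opprK.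
  + by rewrite rmorphN /= mulrN mulNr opprK.
- exact: (@key_pos n a e sf e0 h1 h2 p2).
Qed.

Theorem lemma3 (p q : nat) (a b c d : rat) :
  (0 < p)%N -> (0 < q)%N -> squarefree p -> squarefree q -> degree4 p q ->
  alphaC p q a b c d \in Aint ->
  totally_positive p q a b c d ->
  [/\ (b != 0 -> sqrtC p%:R < trK p q a b c d),
      (c != 0 -> sqrtC q%:R < trK p q a b c d),
      (d != 0 -> sqrtC (rpart p q)%:R < trK p q a b c d) &
      (alphaC p q a b c d \notin Num.int ->
         Num.min (sqrtC p%:R) (Num.min (sqrtC q%:R) (sqrtC (rpart p q)%:R))
           < trK p q a b c d)].
Proof.
move=> p0 q0 sp sq deg hA tp.
have [sr r0] := @rpart_sqf p q p0 q0 sp sq.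
have hE s t : emb p q a b c d s t \in Aint by apply: emb_Aint.
have htr : trK p q a b c d = 4%:R * ratr a by rewrite /trK /emb /=; ring.
have e1 : emb p q a b c d true true + emb p q a b c d true false =
          2%:R * ratr a + 2%:R * ratr b * sqrtC p%:R by rewrite /emb /=; ring.
have e2 : emb p q a b c d false true + emb p q a b c d false false =
          2%:R * ratr a - 2%:R * ratr b * sqrtC p%:R by rewrite /emb /=; ring.
have e3 : emb p q a b c d true true + emb p q a b c d false true =
          2%:R * ratr a + 2%:R * ratr c * sqrtC q%:R by rewrite /emb /=; ring.
have e4 : emb p q a b c d true false + emb p q a b c d false false =
          2%:R * ratr a - 2%:R * ratr c * sqrtC q%:R by rewrite /emb /=; ring.
have e5 : emb p q a b c d true true + emb p q a b c d false false =
          2%:R * ratr a + 2%:R * ratr d * sqrtC (rpart p q)%:R by rewrite /emb /=; ring.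
have e6 : emb p q a b c d true false + emb p q a b c d false true =
          2%:R * ratr a - 2%:R * ratr d * sqrtC (rpart p q)%:R by rewrite /emb /=; ring.
set P := sqrtC p%:R; set Q := sqrtC q%:R; set R := sqrtC (rpart p q)%:R.
have k1 : b != 0 -> P < trK p q a b c d.
  move=> bn; rewrite htr; apply: (@key p a b sp bn).
  - by rewrite -e1 rpredD.
  - by rewrite -e2 rpredD.
  - by rewrite -e1 addr_gt0.
  - by rewrite -e2 addr_gt0.
have k2 : c != 0 -> Q < trK p q a b c d.
  move=> cn; rewrite htr; apply: (@key q a c sq cn).
  - by rewrite -e3 rpredD.
  - by rewrite -e4 rpredD.
  - by rewrite -e3 addr_gt0.
  - by rewrite -e4 addr_gt0.
have k3 : d != 0 -> R < trK p q a b c d.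
  move=> dn; rewrite htr; apply: (@key (rpart p q) a d sr dn).
  - by rewrite -e5 rpredD.
  - by rewrite -e6 rpredD.
  - by rewrite -e5 addr_gt0.
  - by rewrite -e6 addr_gt0.
split => // nint.
have P0 : 0 <= P by rewrite sqrtC_ge0 ler0n.
have Q0 : 0 <= Q by rewrite sqrtC_ge0 ler0n.
have R0 : 0 <= R by rewrite sqrtC_ge0 ler0n.
have cmp (u v : algC) : 0 <= u -> 0 <= v -> u >=< v.
  by move=> u0 v0; apply: real_comparable; apply: ger0_real.
have QR0 : 0 <= Num.min Q R by rewrite comparable_le_min ?cmp ?Q0 ?R0.
have hmin z : (P <= z) || (Q <= z) || (R <= z) -> Num.min P (Num.min Q R) <= z.
  move=> hz; rewrite comparable_ge_min ?cmp // comparable_ge_min ?cmp //.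
  by rewrite orbA.
case: (eqVneq b 0) => [b0|bn].
  case: (eqVneq c 0) => [c0|cn].
    case: (eqVneq d 0) => [d0|dn].
      have ha : alphaC p q a b c d = ratr a.
        by rewrite /alphaC /emb b0 c0 d0 /= !rmorph0; ring.
      by move: nint; rewrite ha Cint_rat_Aint ?Crat_rat // -ha.
    by apply: le_lt_trans (k3 dn); apply: hmin; rewrite lexx !orbT.
  by apply: le_lt_trans (k2 cn); apply: hmin; rewrite lexx orbT.
by apply: le_lt_trans (k1 bn); apply: hmin; rewrite lexx.
Qed.
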